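(* $\Lambda\cap(l-\psi)\Lambda_\wedge=(l-\psi)\Lambda$.
   Context: Let $l$ be an odd prime, $\Lambda=\mathbb{Z}_l[[T]]$, and $\Lambda_\wedge=\{\sum_{k\in\mathbb{Z}}x_kT^k: x_k\in\mathbb{Z}_l,\ x_k\to0 \text{ as } k\to-\infty\}$ (the $l$-adic completion of the localization of $\Lambda$ at the prime ideal $l\Lambda$), containing $\Lambda$. Let $\psi:\Lambda_\wedge\to\Lambda_\wedge$ be the continuous $\mathbb{Z}_l$-algebra endomorphism with $\psi(T)=(1+T)^l-1$ (so $\psi(T^{-1})=((1+T)^l-1)^{-1}$). $(l-\psi)x=lx-\psi(x)$. *)

(* Defs.v *)
From HB Require Import structures.
From mathcomp Require Import all_boot all_order all_algebra.
Set Implicit Arguments. Unset Strict Implicit. Unset Printing Implicit Defensive.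
Import Order.TTheory GRing.Theory Num.Theory.
Local Open Scope ring_scope.

(* An element x = sum_k x_k T^k of Lambda_wedge (coefficients x_k in Z_l) is
   represented by its system of reductions modulo l^n:
     lw n k  = the residue of x_k modulo l^n, as an integer in [0, l^n).
   Z_l = lim Z/l^n, so such a compatible system is exactly a family (x_k)_k of
   l-adic integers; "x_k -> 0 as k -> -oo" means that for every n, x_k = 0 mod
   l^n for all sufficiently negative k. *)
Definition lcoefs := nat -> int -> int.

Definition modl (l n : nat) (a : int) : int := (a %% (l ^ n)%N%:Z)%Z.

Definition is_Lwedge (l : nat) (x : lcoefs) : Prop :=
  [/\ (forall n k, 0 <= x n k < (l ^ n)%N%:Z),
      (forall n k, modl l n (x n.+1 k) = x n k) &
      (forall n, exists K : int, forall k, k < K -> x n k = 0)].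

(* Lambda = Z_l[[T]] inside Lambda_wedge: no negative powers of T. *)
Definition is_Lambda (l : nat) (x : lcoefs) : Prop :=
  is_Lwedge l x /\ (forall n k, k < 0 -> x n k = 0).

(* psi(T) = (1+T)^l - 1 = T^l (1 + l U(T^-1)), with
   U(S) = sum_{i=1}^{l-1} (C(l,i)/l) S^(l-i). *)
Definition psiT (l : nat) : {poly int} := ('X + 1) ^+ l - 1.

Definition Upoly (l : nat) : {poly int} :=
  \sum_(1 <= i < l) ('C(l, i) %/ l)%N%:Z *: 'X^(l - i).

(* V_n(S) = sum_{i<n} (-l U(S))^i, so that (1 + l U) V_n = 1 mod l^n, hence
   psi(T)^{-1} = T^{-l} V_n(T^{-1})  modulo l^n  in Lambda_wedge. *)
Definition Vpoly (l n : nat) : {poly int} :=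
  \sum_(i < n) (- (l%:Z *: Upoly l)) ^+ i.

(* psi_coef l n k m = coefficient of T^m in psi(T)^k, modulo l^n
   (for k = -j < 0:  psi(T)^{-j} = T^{-l j} V_n(T^{-1})^j  mod l^n). *)
Definition psi_coef (l n : nat) (k m : int) : int :=
  match k with
  | Posz j => if m is Posz m' then (psiT l ^+ j)`_m' else 0
  | Negz j' =>
      let j := j'.+1 in
      match (- ((l * j)%N%:Z) - m) with
      | Posz d => (Vpoly l n ^+ j)`_d
      | Negz _ => 0
      end
  end.

(* psi(x) = sum_k x_k psi(T)^k, computed modulo l^n.  The coefficient of T^m in
   psi(T)^k (mod l^n) vanishes unless k lies between m and 0, so the sum
   over k in [-|m|, |m|] is the full (finite, mod l^n) sum. *)
Definition psi (l : nat) (x : lcoefs) : lcoefs := fun n m =>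
  modl l n (\sum_(i < (2 * absz m).+1)
              x n (i%:Z - (absz m)%:Z) * psi_coef l n (i%:Z - (absz m)%:Z) m).

Definition l_minus_psi (l : nat) (x : lcoefs) : lcoefs := fun n m =>
  modl l n (l%:Z * x n m - psi l x n m).

(* Main.v *)
Require Import Defs.
From HB Require Import structures.
From mathcomp Require Import all_boot all_order all_algebra.
Import Order.TTheory GRing.Theory Num.Theory.
Local Open Scope ring_scope.
From Stdlib Require Import FunctionalExtensionality.

Lemma coef0 l n (k m : int) : m < 0 ->
  (0 <= k) || (absz m < l * absz k)%N -> psi_coef l n k m = 0.
Proof.
case: k => [j|j']; case: m => [m'|m'] //= _ H.
case E: (- _ - _) => [d|d] //.
exfalso; move: E; rewrite NegzE opprK => E.
have : (Posz d < 0)%R.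
  by rewrite -E addrC subr_lt0 ltz_nat.
by [].
Qed.

Lemma psi_zero l x n (m : int) : m < 0 ->
  (forall k : int, k < 0 -> (l * absz k <= absz m)%N -> x n k = 0) ->
  psi l x n m = 0.
Proof.
move=> hm hx; rewrite /psi big1 ?/modl ?mod0z // => i _.
set k := (_ - _).
have [hk|hk] := leP 0 k; first by rewrite coef0 ?hk ?mulr0.
have [hk2|hk2] := leqP (l * absz k)%N (absz m).
  by rewrite hx ?mul0r.
by rewrite coef0 ?hk2 ?orbT ?mulr0.
Qed.

Lemma neg_zero l x : (2 < l)%N -> is_Lwedge l x ->
  (forall n m, m < 0 -> l_minus_psi l x n m = 0) ->
  forall a n, (0 < a)%N -> x n (- a%:Z) = 0.
Proof.
move=> hl [hb hc hv] hy; elim/ltn_ind => a IH n ha.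
have hp : forall n, psi l x n (- a%:Z) = 0.
  move=> n'; apply: psi_zero; first by rewrite oppr_lt0 ltz_nat.
  move=> k hk hka.
  have -> : k = - (absz k)%:Z by rewrite abszE ltr0_norm ?opprK.
  apply: IH; last by rewrite absz_gt0 ltr0_neq0.
  rewrite abszN /= in hka; apply: leq_trans hka.
  by apply: ltn_Pmull; [apply: ltn_trans hl | rewrite absz_gt0 ltr0_neq0].
have := hy n.+1 (- a%:Z); rewrite oppr_lt0 ltz_nat ha => /(_ isT).
rewrite /l_minus_psi hp subr0 /modl => /dvdz_mod0P.
rewrite expnS PoszM dvdz_mul2l; last by rewrite eqz_nat; apply: lt0n_neq0; apply: ltn_trans hl.
by move=> /dvdz_mod0P h; rewrite -hc /modl h.
Qed.

Lemma modz_modd (a d e : int) : (d %| e)%Z -> modz (modz a e) d = modz a d.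
Proof.
move=> /dvdzP [c ->].
by rewrite [in RHS](divz_eq a (c * d)) mulrA modzMDl.
Qed.

Lemma dvd_pow l n : ((l ^ n)%N%:Z %| (l ^ n.+1)%N%:Z)%Z.
Proof. by rewrite expnS PoszM dvdz_mull. Qed.

Lemma sum_cong (I : Type) (r : seq I) (d : int) (F G : I -> int) :
  (forall i, modz (F i) d = modz (G i) d) ->
  modz (\sum_(i <- r) F i) d = modz (\sum_(i <- r) G i) d.
Proof.
move=> h; apply: (big_ind2 (fun a b => modz a d = modz b d)) => //.
move=> a1 a2 b1 b2 e1 e2.
by rewrite -modzDm e1 e2 modzDm.
Qed.

Lemma lam_image l x : (0 < l)%N -> is_Lambda l x -> is_Lambda l (l_minus_psi l x).
Proof.
move=> hl [[hb hc hv] hn].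
have d0 : forall n, (l ^ n)%N%:Z != 0 by move=> n; rewrite eqz_nat -lt0n expn_gt0 hl.
have dp : forall n, 0 < (l ^ n)%N%:Z by move=> n; rewrite ltz_nat expn_gt0 hl.
have neg : forall n m, m < 0 -> l_minus_psi l x n m = 0.
  move=> n m hm; rewrite /l_minus_psi hn // psi_zero //; last by move=> k hk _; apply: hn.
  by rewrite mulr0 subr0 /modl mod0z.
split; last by move=> n k; apply: neg.
split.
- move=> n k; rewrite /l_minus_psi /modl modz_ge0 ?ltz_pmod //.
- move=> n m; rewrite /l_minus_psi /modl modz_modd ?dvd_pow //.
  have hA : forall k, modz (x n.+1 k) (l ^ n)%N%:Z = modz (x n k) (l ^ n)%N%:Z.
    by move=> k; rewrite -(hc n k) /modl modz_mod.
  have hB : modz (psi l x n.+1 m) (l ^ n)%N%:Z = modz (psi l x n m) (l ^ n)%N%:Z.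
    rewrite /psi /modl modz_modd ?dvd_pow // modz_mod.
    apply: sum_cong => i; move: (_ - _) => k.
    case: k => [j|j]; last by rewrite (hn n.+1) ?(hn n) ?mul0r.
    by rewrite -modzMml hA modzMml.
  rewrite -modzDm -modzNm -modzMmr hA hB modzMmr modzNm modzDm.
  by [].
- by move=> n; exists 0 => k hk; apply: neg.
Qed.

Theorem mainTheorem5 (l : nat) (hl : prime l) (hodd : odd l) (y : lcoefs) :
  (is_Lambda l y /\
     exists x, is_Lwedge l x /\ (forall n m, y n m = l_minus_psi l x n m))
  <->
  (exists x, is_Lambda l x /\ (forall n m, y n m = l_minus_psi l x n m)).
Proof.
have l2 : (2 < l)%N.
  have := prime_gt1 hl; case: l hl hodd => [|[|[|]]] //.
split.
- move=> [[hyL hyneg] [x [hx hxy]]]; exists x; split => //; split => // n k hk.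
  have -> : k = - (absz k)%:Z by rewrite abszE ltr0_norm ?opprK.
  apply: (neg_zero _ _ l2 hx); first by move=> n' m hm; rewrite -hxy hyneg.
  by rewrite absz_gt0 ltr0_neq0.
- move=> [x [hx hxy]].
  have -> : y = l_minus_psi l x.
    apply: functional_extensionality => n; apply: functional_extensionality => m.
    exact: hxy.
  split; first by apply: lam_image => //; apply: ltn_trans l2.
  by exists x; split => //; case: hx.
Qed.
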